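(* Let $n\ge0$ and $x,y,z\in Q_n$. Then $[x,y,z]=[z,y,x]$.
   Context: Cayley--Dickson loops: $Q_0=\{1,-1\}\subset\mathbb{R}$ with conjugation $x^*=x$. For $n\ge1$, $Q_n=\{(x,0),(x,1)\mid x\in Q_{n-1}\}$ with multiplication $(x,0)(y,0)=(xy,0)$, $(x,0)(y,1)=(yx,1)$, $(x,1)(y,0)=(xy^*,1)$, $(x,1)(y,1)=(-y^*x,0)$ and conjugation $(x,0)^*=(x^*,0)$, $(x,1)^*=(-x,1)$, where $-(x,a)=(-x,a)$. $Q_n$ is a loop with neutral element $1=(1,0,\dots,0)$; $-1=(-1,0,\dots,0)$ commutes and associates with all elements and $-x=(-1)x$. The associator $[x,y,z]$ is defined by $(xy)z=(x(yz))[x,y,z]$; it always lies in $\{1,-1\}$. *)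

(* Defs.v *)
(* Cayley--Dickson loops Q_n.
   Q_0 = {1,-1} is encoded by bool: false = 1, true = -1.
   Q_(n+1) = Q_n * bool, where (x,false) = (x,0) and (x,true) = (x,1). *)

Fixpoint Q (n : nat) : Type :=
  match n with
  | O => bool
  | S m => (Q m * bool)%type
  end.

Fixpoint Qneg (n : nat) : Q n -> Q n :=
  match n return Q n -> Q n with
  | O => fun x => negb x
  | S m => fun p => (Qneg m (fst p), snd p)
  end.

Fixpoint Qconj (n : nat) : Q n -> Q n :=
  match n return Q n -> Q n with
  | O => fun x => x
  | S m => fun p =>
      if snd p then (Qneg m (fst p), true) else (Qconj m (fst p), false)
  end.

Fixpoint Qmul (n : nat) : Q n -> Q n -> Q n :=
  match n return Q n -> Q n -> Q n with
  | O => fun x y => xorb x y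
  | S m => fun p q =>
      let x := fst p in let y := fst q in
      match snd p, snd q with
      | false, false => (Qmul m x y, false)
      | false, true  => (Qmul m y x, true)
      | true,  false => (Qmul m x (Qconj m y), true)
      | true,  true  => (Qneg m (Qmul m (Qconj m y) x), false)
      end
  end.

Fixpoint Qone (n : nat) : Q n :=
  match n return Q n with
  | O => false
  | S m => (Qone m, false)
  end.

Definition Qmone (n : nat) : Q n := Qneg n (Qone n).

Definition beq (a b : bool) : bool := if a then b else negb b.

Fixpoint Qeqb (n : nat) : Q n -> Q n -> bool :=
  match n return Q n -> Q n -> bool with
  | O => fun x y => beq x y
  | S m => fun p q => andb (Qeqb m (fst p) (fst q)) (beq (snd p) (snd q))
  end.

(* The associator [x,y,z] is defined by (xy)z = (x(yz))[x,y,z] and always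
   lies in {1,-1}; hence it is 1 exactly when (xy)z = x(yz), and -1 otherwise. *)
Definition Qassoc (n : nat) (x y z : Q n) : Q n :=
  if Qeqb n (Qmul n (Qmul n x y) z) (Qmul n x (Qmul n y z))
  then Qone n else Qmone n.

(* Main.v *)
Require Import Defs.
From Stdlib Require Import Setoid Bool.

Lemma neg_neg n (x : Q n) : Qneg n (Qneg n x) = x.
Proof. induction n; simpl. now destruct x. destruct x; simpl; now rewrite IHn. Qed.

Lemma conj_neg n (x : Q n) : Qconj n (Qneg n x) = Qneg n (Qconj n x).
Proof. induction n; simpl. reflexivity. destruct x as [x []]; simpl; now rewrite ?IHn. Qed.

Lemma conj_conj n (x : Q n) : Qconj n (Qconj n x) = x.
Proof. induction n; simpl. reflexivity. destruct x as [x []]; simpl; now rewrite ?IHn, ?neg_neg. Qed.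

Lemma mul_neg n : forall x y : Q n,
  Qmul n (Qneg n x) y = Qneg n (Qmul n x y) /\ Qmul n x (Qneg n y) = Qneg n (Qmul n x y).
Proof.
  induction n; simpl. intros [] []; auto.
  intros [x []] [y []]; simpl; split;
  rewrite ?conj_neg, ?(proj1 (IHn _ _)), ?(proj2 (IHn _ _)); reflexivity.
Qed.
Lemma mul_negl n (x y : Q n) : Qmul n (Qneg n x) y = Qneg n (Qmul n x y).
Proof. apply mul_neg. Qed.
Lemma mul_negr n (x y : Q n) : Qmul n x (Qneg n y) = Qneg n (Qmul n x y).
Proof. apply mul_neg. Qed.

Lemma conj_mul n : forall x y : Q n, Qconj n (Qmul n x y) = Qmul n (Qconj n y) (Qconj n x).
Proof.
  induction n; simpl. intros [] []; auto.
  intros [x []] [y []]; simpl;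
  rewrite ?conj_neg, ?IHn, ?conj_conj, ?mul_negl, ?mul_negr, ?neg_neg; reflexivity.
Qed.

Lemma conj_cases n : forall x : Q n, Qconj n x = x \/ Qconj n x = Qneg n x.
Proof.
  induction n; simpl. auto.
  intros [x []]; simpl. right; reflexivity.
  destruct (IHn x) as [H|H]; rewrite H; auto.
Qed.

Lemma neg_iff n (a b : Q n) : Qneg n a = Qneg n b <-> a = b.
Proof. split; intro H. rewrite <- (neg_neg n a), H; apply neg_neg. now subst. Qed.
Lemma conj_iff n (a b : Q n) : a = b <-> Qconj n a = Qconj n b.
Proof. split; intro H. now subst. rewrite <- (conj_conj n a), H; apply conj_conj. Qed.
Lemma pair_iff (A : Type) (a c : A) (b : bool) : ((a, b) = (c, b)) <-> a = c.
Proof. split; intro H. now injection H. now subst. Qed.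

Ltac norm := repeat (rewrite ?conj_mul, ?conj_conj, ?conj_neg, ?mul_negl, ?mul_negr, ?neg_neg, ?neg_iff).

Ltac close := first [ tauto | (split; intros ?; symmetry; assumption) ].
Ltac fin x y z := destruct (conj_cases _ x) as [Hx|Hx]; destruct (conj_cases _ y) as [Hy|Hy];
  destruct (conj_cases _ z) as [Hz|Hz]; rewrite ?Hx, ?Hy, ?Hz; norm; close.

Lemma assoc_iff n : forall x y z : Q n,
  (Qmul n (Qmul n x y) z = Qmul n x (Qmul n y z)) <->
  (Qmul n (Qmul n z y) x = Qmul n z (Qmul n y x)).
Proof.
  induction n; simpl. intros [] [] []; simpl; tauto.
  intros [x []] [y []] [z []]; simpl; rewrite ?pair_iff; norm.
  all: first [ apply IHn | fin x y z | (rewrite conj_iff at 1; norm; fin x y z) ].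
Qed.

Lemma beq_true a b : beq a b = true <-> a = b.
Proof. destruct a, b; simpl; split; congruence. Qed.

Lemma Qeqb_iff n : forall a b : Q n, Qeqb n a b = true <-> a = b.
Proof.
  induction n; simpl. apply beq_true.
  intros [a1 a2] [b1 b2]; simpl. rewrite andb_true_iff, IHn, beq_true.
  split. intros [-> ->]; auto. intro H; now injection H.
Qed.

Theorem mainTheorem2 (n : nat) (x y z : Q n) :
  Qassoc n x y z = Qassoc n z y x.
Proof.
  unfold Qassoc.
  destruct (Qeqb n (Qmul n (Qmul n x y) z) (Qmul n x (Qmul n y z))) eqn:E1;
  destruct (Qeqb n (Qmul n (Qmul n z y) x) (Qmul n z (Qmul n y x))) eqn:E2; auto;
  rewrite Qeqb_iff in *; [apply assoc_iff in E1 | apply assoc_iff in E2];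
  first [ rewrite <- Qeqb_iff in E1; congruence | rewrite <- Qeqb_iff in E2; congruence ].
Qed.
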